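(* (a) For every $A\in\mathcal{A}$, $\widehat{\chi_A}=|\chi_A\rangle\langle\chi_A|=\mu(A)$. (b) For every random variable $f$ and every $\alpha\in\mathbb{R}$, $\widehat{\alpha f}=\alpha\widehat f$. (c) If $0\le f_1\le f_2\le\cdots$ is an increasing sequence of random variables converging pointwise to a random variable $f$, then $\widehat{f_i}\to\widehat f$ in the operator norm topology. (d) If $f,g,h$ are random variables with mutually disjoint supports, then $$\widehat{f+g+h}=\widehat{f+g}+\widehat{f+h}+\widehat{g+h}-\widehat f-\widehat g-\widehat h.$$
   Context: $(\Omega,\mathcal{A},\nu)$ is a probability space and $H=L_2(\Omega,\mathcal{A},\nu)$ is the complex Hilbert space with inner product $\langle f,g\rangle=\int\bar f g\,d\nu$. A random variable is a real-valued $f\in H$. For $A\in\mathcal{A}$, $\chi_A$ is its characteristic function and $\mu(A)=|\chi_A\rangle\langle\chi_A|$ is the operator $g\mapsto\left(\int_A g\,d\nu\right)\chi_A$. For a random variable $f\ge 0$, its quantization $\widehat f$ is the operator on $H$ given by $(\widehat f g)(y)=\int\min[f(x),f(y)]\,g(x)\,d\nu(x)$. For an arbitrary random variable $f$, write $f=f^+-f^-$ with $f^+=\max(f,0)$, $f^-=-\min(f,0)$, and define $\widehat f=\widehat{f^+}-\widehat{f^-}$. (Here $\widehat{\alpha f}$ etc. denotes the quantization of the random variable $\alpha f$.) *)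

(* Defs.v *)
From HB Require Import structures.
From mathcomp Require Import all_boot all_order all_algebra.
From mathcomp Require Import all_classical all_reals all_analysis.
From mathcomp Require Import complex.

Set Implicit Arguments.
Unset Strict Implicit.
Unset Printing Implicit Defensive.

Import Order.TTheory GRing.Theory Num.Theory.
Local Open Scope classical_set_scope.
Local Open Scope ring_scope.
Local Open Scope complex_scope.

Section Defs.
Context {d : measure_display} {T : measurableType d} {R : realType}.
Variable mu : {measure set T -> \bar R}.

Definition cnorm2 (z : R[i]) : R := complex.Re z ^+ 2 + complex.Im z ^+ 2.
Definition cabs (z : R[i]) : R := Num.sqrt (cnorm2 z).

Definition cint (g : T -> R[i]) : R[i] :=
  (Rintegral mu setT (fun x => complex.Re (g x)))%:C
  + 'i%C * (Rintegral mu setT (fun x => complex.Im (g x)))%:C.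

(* elements of H = L_2(Omega, A, nu) (complex-valued), given by representatives *)
Definition inL2 (g : T -> R[i]) : Prop :=
  [/\ measurable_fun setT (fun x => complex.Re (g x)),
      measurable_fun setT (fun x => complex.Im (g x)) &
      (\int[mu]_x (cnorm2 (g x))%:E < +oo)%E].

Definition l2norm (g : T -> R[i]) : \bar R :=
  Lnorm mu 2%:E (fun x => (cabs (g x))%:E).

Definition cinner (f g : T -> R[i]) : R[i] := cint (fun x => (f x)^*%C * g x).

(* random variable: real-valued element of H *)
Definition rv (f : T -> R) : Prop :=
  measurable_fun setT f /\ (\int[mu]_x ((f x) ^+ 2)%:E < +oo)%E.

(* (linear) operators on H, acting on representatives *)
Definition op := (T -> R[i]) -> (T -> R[i]).

Definition op_eq (A B : op) : Prop :=
  forall g, inL2 g -> {ae mu, forall y, A g y = B g y}.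

Definition opnorm (A : op) : \bar R :=
  ereal_sup [set l2norm (A g) | g in [set g | inL2 g /\ (l2norm g <= 1)%E]].

Definition op_add (A B : op) : op := fun g y => A g y + B g y.
Definition op_sub (A B : op) : op := fun g y => A g y - B g y.
Definition op_scale (a : R) (A : op) : op := fun g y => a%:C * A g y.

Definition ketbra (u v : T -> R[i]) : op := fun g y => cinner v g * u y.

Definition cchi (A : set T) : T -> R[i] := fun x => (\1_A x : R)%:C.

Definition muop (A : set T) : op := ketbra (cchi A) (cchi A).

Definition quant_pos (f : T -> R) : op :=
  fun g y => cint (fun x => (Num.min (f x) (f y))%:C * g x).

Definition fpos (f : T -> R) : T -> R := fun x => Num.max (f x) 0.
Definition fneg (f : T -> R) : T -> R := fun x => - Num.min (f x) 0.

Definition quant (f : T -> R) : op := op_sub (quant_pos (fpos f)) (quant_pos (fneg f)).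

End Defs.

(* Main.v *)
Require Import Defs.
From HB Require Import structures.
From mathcomp Require Import all_boot all_order all_algebra.
From mathcomp Require Import all_classical all_reals all_analysis.
From mathcomp Require Import complex.
From mathcomp Require Import ring lra measurable_realfun.

Import Order.TTheory GRing.Theory Num.Theory.
Import numFieldNormedType.Exports.
Local Open Scope classical_set_scope.
Local Open Scope ring_scope.
Section S.
Local Open Scope complex_scope.
Context {R : realType} {d : measure_display} {T : measurableType d} (P : probability T R).

Lemma ceq (z w : R[i]) : complex.Re z = complex.Re w -> complex.Im z = complex.Im w -> z = w.
Proof. by case: z => a b; case: w => c e /= -> ->. Qed.

Lemma ReM (a : R) (z : R[i]) : complex.Re (a%:C * z) = a * complex.Re z.
Proof. by case: z => x y /=; ring. Qed.
Lemma ImM (a : R) (z : R[i]) : complex.Im (a%:C * z) = a * complex.Im z.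
Proof. by case: z => x y /=; ring. Qed.
Lemma Re_cint u : complex.Re (cint P u) = \int[P]_x complex.Re (u x).
Proof. rewrite /cint /=; ring. Qed.
Lemma Im_cint u : complex.Im (cint P u) = \int[P]_x complex.Im (u x).
Proof. rewrite /cint /=; ring. Qed.

Definition bdd (k : T -> R) := measurable_fun setT k /\ exists C, forall x, `|k x| <= C.

Lemma bdd_bounded k : bdd k -> [bounded k x | x in setT].
Proof.
move=> [_ [C HC]]; rewrite /bounded_near; near=> M; rewrite /globally /= => y _.
apply: (le_trans (HC y)); near: M; apply: nbhs_pinfty_ge; exact: num_real.
Unshelve. all: by end_near. Qed.

Lemma absle (r : R) : `|r| <= 1 + r ^+ 2.
Proof. have [h|h] := lerP 0 r; [rewrite ger0_norm // | rewrite ltr0_norm //]; nra. Qed.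

Lemma int_L2 (phi : T -> R) : measurable_fun setT phi ->
  (\int[P]_x ((phi x) ^+ 2)%:E < +oo)%E -> P.-integrable setT (EFin \o phi).
Proof.
move=> mphi fin.
have i1 : P.-integrable setT (EFin \o (fun x => 1 + phi x ^+ 2)).
  apply/integrableP; split.
    apply/measurable_EFinP; apply: measurable_funD => //.
    exact: measurable_funX.
  under eq_integral do rewrite /= ger0_norm ?addr_ge0 ?sqr_ge0 // EFinD.
  rewrite ge0_integralD //; last 2 first.
  - by move=> x _; rewrite lee_fin sqr_ge0.
  - apply/measurable_EFinP; exact: measurable_funX.
  have -> : (\int[P]_x (1%:E) = 1)%E.
    by rewrite (_ : (fun x => 1%:E) = cst 1%:E)%E // integral_cst //= probability_setT mule1.
  by rewrite lte_add_pinfty // ltry.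
apply: le_integrable i1 => //; first exact/measurable_EFinP.
move=> x _ /=; rewrite lee_fin; apply: (le_trans (absle (phi x))); exact: ler_norm.
Qed.

Lemma int_bdd k phi : bdd k -> P.-integrable setT (EFin \o phi) ->
  P.-integrable setT (EFin \o (fun x => k x * phi x)).
Proof.
move=> bk iphi; have := integrableMr measurableT (proj1 bk) (bdd_bounded _ bk) iphi.
by move=> H; apply: (eq_integrable measurableT _ _ _ H) => x _.
Qed.

Lemma ReB (z w : R[i]) : complex.Re (z - w) = complex.Re z - complex.Re w.
Proof. by case: z => a b; case: w => c e. Qed.
Lemma ImB (z w : R[i]) : complex.Im (z - w) = complex.Im z - complex.Im w.
Proof. by case: z => a b; case: w => c e. Qed.
Lemma ReD (z w : R[i]) : complex.Re (z + w) = complex.Re z + complex.Re w.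
Proof. by case: z => a b; case: w => c e. Qed.
Lemma ImD (z w : R[i]) : complex.Im (z + w) = complex.Im z + complex.Im w.
Proof. by case: z => a b; case: w => c e. Qed.

Lemma Re_cintk k g : complex.Re (cint P (fun x => (k x)%:C * g x)) =
  \int[P]_x (k x * complex.Re (g x)).
Proof. by rewrite Re_cint; apply: eq_Rintegral => x _; exact: ReM. Qed.
Lemma Im_cintk k g : complex.Im (cint P (fun x => (k x)%:C * g x)) =
  \int[P]_x (k x * complex.Im (g x)).
Proof. by rewrite Im_cint; apply: eq_Rintegral => x _; exact: ImM. Qed.

Lemma inL2_Re g : inL2 P g -> P.-integrable setT (EFin \o (fun x => complex.Re (g x))).
Proof.
case=> mre mim fin; apply: int_L2 => //; apply: le_lt_trans fin.
apply: ge0_le_integral => //.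
- by move=> x _; rewrite lee_fin sqr_ge0.
- by apply/measurable_EFinP; exact: measurable_funX.
- apply/measurable_EFinP; apply: measurable_funD; exact: measurable_funX.
- by move=> x _; rewrite lee_fin /cnorm2 lerDl sqr_ge0.
Qed.

Lemma inL2_Im g : inL2 P g -> P.-integrable setT (EFin \o (fun x => complex.Im (g x))).
Proof.
case=> mre mim fin; apply: int_L2 => //; apply: le_lt_trans fin.
apply: ge0_le_integral => //.
- by move=> x _; rewrite lee_fin sqr_ge0.
- by apply/measurable_EFinP; exact: measurable_funX.
- apply/measurable_EFinP; apply: measurable_funD; exact: measurable_funX.
- by move=> x _; rewrite lee_fin /cnorm2 lerDr sqr_ge0.
Qed.

Lemma RintB k1 k2 phi : bdd k1 -> bdd k2 -> P.-integrable setT (EFin \o phi) ->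
  \int[P]_x (k1 x * phi x) - \int[P]_x (k2 x * phi x) = \int[P]_x ((k1 x - k2 x) * phi x).
Proof.
move=> b1 b2 ip; rewrite -RintegralB //; last 2 first.
- exact: int_bdd.
- exact: int_bdd.
by apply: eq_Rintegral => x _; ring.
Qed.

Lemma RintD k1 k2 phi : bdd k1 -> bdd k2 -> P.-integrable setT (EFin \o phi) ->
  \int[P]_x (k1 x * phi x) + \int[P]_x (k2 x * phi x) = \int[P]_x ((k1 x + k2 x) * phi x).
Proof.
move=> b1 b2 ip; rewrite -RintegralD //; last 2 first.
- exact: int_bdd.
- exact: int_bdd.
by apply: eq_Rintegral => x _; ring.
Qed.

Lemma RintZ a k phi : bdd k -> P.-integrable setT (EFin \o phi) ->
  a * \int[P]_x (k x * phi x) = \int[P]_x ((a * k x) * phi x).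
Proof.
move=> b ip; rewrite -RintegralZl //; last exact: int_bdd.
by apply: eq_Rintegral => x _; ring.
Qed.

Lemma cintB k1 k2 g : bdd k1 -> bdd k2 -> inL2 P g ->
  cint P (fun x => (k1 x)%:C * g x) - cint P (fun x => (k2 x)%:C * g x) =
  cint P (fun x => (k1 x - k2 x)%:C * g x).
Proof.
move=> b1 b2 ig; apply: ceq.
  by rewrite ReB !Re_cintk RintB //; exact: inL2_Re.
by rewrite ImB !Im_cintk RintB //; exact: inL2_Im.
Qed.

Lemma cintD k1 k2 g : bdd k1 -> bdd k2 -> inL2 P g ->
  cint P (fun x => (k1 x)%:C * g x) + cint P (fun x => (k2 x)%:C * g x) =
  cint P (fun x => (k1 x + k2 x)%:C * g x).
Proof.
move=> b1 b2 ig; apply: ceq.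
  by rewrite ReD !Re_cintk RintD //; exact: inL2_Re.
by rewrite ImD !Im_cintk RintD //; exact: inL2_Im.
Qed.

Lemma cintZ a k g : bdd k -> inL2 P g ->
  a%:C * cint P (fun x => (k x)%:C * g x) = cint P (fun x => (a * k x)%:C * g x).
Proof.
move=> b ig; apply: ceq.
  by rewrite ReM !Re_cintk RintZ //; exact: inL2_Re.
by rewrite ImM !Im_cintk RintZ //; exact: inL2_Im.
Qed.

Lemma bddB k1 k2 : bdd k1 -> bdd k2 -> bdd (fun x => k1 x - k2 x).
Proof.
move=> [m1 [C1 H1]] [m2 [C2 H2]]; split; first exact: measurable_funB.
exists (C1 + C2) => x; apply: (le_trans (ler_normB _ _)); exact: lerD.
Qed.

Lemma bddD k1 k2 : bdd k1 -> bdd k2 -> bdd (fun x => k1 x + k2 x).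
Proof.
move=> [m1 [C1 H1]] [m2 [C2 H2]]; split; first exact: measurable_funD.
exists (C1 + C2) => x; apply: (le_trans (ler_normD _ _)); exact: lerD.
Qed.

Lemma bddZ a k : bdd k -> bdd (fun x => a * k x).
Proof.
move=> [m1 [C1 H1]]; split; first exact: measurable_funM.
exists (`|a| * C1) => x; rewrite normrM; apply: ler_wpM2l => //.
Qed.

Lemma bdd_min (u : T -> R) (c : R) : measurable_fun setT u -> (forall x, 0 <= u x) -> 0 <= c ->
  bdd (fun x => Num.min (u x) c).
Proof.
move=> mu u0 c0; split; first exact: measurable_minr.
exists c => x; rewrite ger0_norm; first by rewrite ge_min lexx orbT.
by rewrite le_min u0.
Qed.

Definition Kp (u v : R) : R :=
  Num.min (Num.max u 0) (Num.max v 0) - Num.min (- Num.min u 0) (- Num.min v 0).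

Lemma bdd_Kp (f : T -> R) (c : R) : measurable_fun setT f -> bdd (fun x => Kp (f x) c).
Proof.
move=> mf; apply: bddB; apply: bdd_min.
- exact: measurable_maxr.
- by move=> x; rewrite le_max lexx orbT.
- by rewrite le_max lexx orbT.
- apply: measurableT_comp => //; exact: measurable_minr.
- by move=> x; rewrite oppr_ge0 ge_min lexx orbT.
- by rewrite oppr_ge0 ge_min lexx orbT.
Qed.

Lemma quantE (f : T -> R) g y : measurable_fun setT f -> inL2 P g ->
  quant P f g y = cint P (fun x => (Kp (f x) (f y))%:C * g x).
Proof.
move=> mf ig; rewrite /quant /op_sub /quant_pos cintB //; apply: bdd_min.
- exact: measurable_maxr.
- by move=> x; rewrite /fpos le_max lexx orbT.
- by rewrite /fpos le_max lexx orbT.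
- apply: measurableT_comp => //; exact: measurable_minr.
- by move=> x; rewrite /fneg oppr_ge0 ge_min lexx orbT.
- by rewrite /fneg oppr_ge0 ge_min lexx orbT.
Qed.


Lemma KpE1 (u v : R) : 0 <= u -> 0 <= v -> Kp u v = Num.min u v.
Proof. by move=> hu hv; rewrite /Kp (max_l hu) (max_l hv) (min_r hu) (min_r hv) oppr0 minxx subr0. Qed.
Lemma KpE2 (u v : R) : u <= 0 -> v <= 0 -> Kp u v = Num.max u v.
Proof.
move=> hu hv; rewrite /Kp (max_r hu) (max_r hv) (min_l hu) (min_l hv) minxx sub0r.
have [h|h] := leP u v.
  by rewrite min_r ?opprK // lerN2.
by rewrite min_l ?opprK // lerN2 ltW.
Qed.
Lemma KpE3 (u v : R) : 0 <= u -> v <= 0 -> Kp u v = 0.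
Proof.
move=> hu hv; rewrite /Kp (max_l hu) (max_r hv) (min_r hu) (min_l hv) oppr0.
by rewrite (min_l (_ : 0 <= - v)) ?subrr // oppr_ge0.
Qed.
Lemma KpE4 (u v : R) : u <= 0 -> 0 <= v -> Kp u v = 0.
Proof.
move=> hu hv; rewrite /Kp (max_r hu) (max_l hv) (min_l hu) (min_r hv) oppr0.
by rewrite (min_l hv) (min_r (_ : 0 <= - u)) ?subrr // oppr_ge0.
Qed.
Lemma Kp00 : Kp 0 0 = 0.
Proof. by rewrite KpE1 // minxx. Qed.

Lemma KpZ (a u v : R) : Kp (a * u) (a * v) = a * Kp u v.
Proof.
case/orP: (le_total 0 a) => ha; case/orP: (le_total 0 u) => hu; case/orP: (le_total 0 v) => hv.
- by rewrite !KpE1 ?mulr_ge0 // minr_pMr.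
- by rewrite !KpE3 ?mulr0 ?mulr_ge0 ?mulr_ge0_le0.
- by rewrite !KpE4 ?mulr0 ?mulr_ge0 ?mulr_ge0_le0.
- by rewrite !KpE2 ?mulr_ge0_le0 // maxr_pMr.
- by rewrite (KpE1 u v hu hv) KpE2 ?mulr_le0_ge0 // minr_nMr.
- by rewrite (KpE3 u v hu hv) KpE4 ?mulr0 ?mulr_le0_ge0 ?mulr_le0.
- by rewrite (KpE4 u v hu hv) KpE3 ?mulr0 ?mulr_le0_ge0 ?mulr_le0.
- by rewrite (KpE2 u v hu hv) KpE1 ?mulr_le0 // maxr_nMr.
Qed.

Lemma Kp_id (a b c a' b' c' : R) :
  (b = 0 /\ c = 0) \/ (a = 0 /\ c = 0) \/ (a = 0 /\ b = 0) ->
  (b' = 0 /\ c' = 0) \/ (a' = 0 /\ c' = 0) \/ (a' = 0 /\ b' = 0) ->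
  Kp (a + b + c) (a' + b' + c') = Kp (a + b) (a' + b') + Kp (a + c) (a' + c')
    + Kp (b + c) (b' + c') - Kp a a' - Kp b b' - Kp c c'.
Proof.
by case=> [[-> ->]|[[-> ->]|[-> ->]]]; case=> [[-> ->]|[[-> ->]|[-> ->]]];
  rewrite ?(addr0, add0r) Kp00; ring.
Qed.

Lemma mul1C (z : R[i]) : z * (1%:C) = z.
Proof. by apply: ceq; case: z => a b /=; ring. Qed.
Lemma mul0C (z : R[i]) : z * (0%:C) = 0.
Proof. by apply: ceq; case: z => a b /=; ring. Qed.
Lemma conjC_real (r : R) : (r%:C)^* = r%:C.
Proof. by apply: ceq => //=; rewrite oppr0. Qed.

Lemma cint0 g : cint P (fun x => 0%:C * g x) = 0.
Proof.
apply: ceq; rewrite ?Re_cintk ?Im_cintk /=;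
  under eq_Rintegral do rewrite mul0r; by rewrite Rintegral_cst // mul0r.
Qed.

Lemma part_a (A : set T) : measurable A -> op_eq P (quant P (\1_A : T -> R)) (muop P A).
Proof.
move=> mA g ig; apply: aeW => y.
rewrite quantE //.
rewrite /muop /ketbra /cinner /cchi.
have i0 x : 0 <= (\1_A x : R) by rewrite indicE.
have i1 x : (\1_A x : R) <= 1 by rewrite indicE; case: (x \in A).
have [yA|yA] := boolP (y \in A).
  rewrite (_ : \1_A y = 1); last by rewrite indicE yA.
  rewrite mul1C; congr (cint P _); apply/funext => x.
  by rewrite conjC_real KpE1 // (min_l (i1 x)).
rewrite (_ : \1_A y = 0); last by rewrite indicE (negbTE yA).
rewrite mul0C -(cint0 g); congr (cint P _); apply/funext => x.
by rewrite KpE1 // (min_r (i0 x)).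
Qed.

Lemma part_b (f : T -> R) (a : R) : rv P f ->
  op_eq P (quant P (fun x => a * f x)) (op_scale a (quant P f)).
Proof.
move=> [mf _] g ig; apply: aeW => y.
rewrite /op_scale !quantE //; last exact: measurable_funM.
rewrite cintZ //; last exact: bdd_Kp.
by congr (cint P _); apply/funext => x; rewrite KpZ.
Qed.

Lemma dis3 (f g h : T -> R) :
  [set x | f x != 0] `&` [set x | g x != 0] = set0 ->
  [set x | f x != 0] `&` [set x | h x != 0] = set0 ->
  [set x | g x != 0] `&` [set x | h x != 0] = set0 ->
  forall x, (g x = 0 /\ h x = 0) \/ (f x = 0 /\ h x = 0) \/ (f x = 0 /\ g x = 0).
Proof.
move=> Hfg Hfh Hgh x.
have nz (u v : T -> R) : [set x | u x != 0] `&` [set x | v x != 0] = set0 ->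
    u x = 0 \/ v x = 0.
  move=> H; case: (eqVneq (u x) 0) => [->|hu]; first by left.
  case: (eqVneq (v x) 0) => [->|hv]; first by right.
  have : ([set x | u x != 0] `&` [set x | v x != 0]) x by split.
  by rewrite H.
case: (nz _ _ Hfg) => h1; case: (nz _ _ Hfh) => h2; case: (nz _ _ Hgh) => h3; tauto.
Qed.

Ltac sbdd := repeat first [apply: bdd_Kp | apply: bddB | apply: bddD | apply: measurable_funD | assumption].

Lemma part_d (f g h : T -> R) : rv P f -> rv P g -> rv P h ->
     [set x | f x != 0] `&` [set x | g x != 0] = set0 ->
     [set x | f x != 0] `&` [set x | h x != 0] = set0 ->
     [set x | g x != 0] `&` [set x | h x != 0] = set0 ->
     op_eq P (quant P (fun x => f x + g x + h x))
       (op_sub (op_sub (op_sub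
          (op_add (op_add (quant P (fun x => f x + g x))
                          (quant P (fun x => f x + h x)))
                  (quant P (fun x => g x + h x)))
          (quant P f)) (quant P g)) (quant P h)).
Proof.
move=> [mf _] [mg _] [mh _] Hfg Hfh Hgh u iu; apply: aeW => y.
have D := @dis3 f g h Hfg Hfh Hgh.
rewrite /op_sub /op_add !quantE //; try sbdd.
rewrite cintD; try sbdd. rewrite cintD; try sbdd.
rewrite cintB; try sbdd. rewrite cintB; try sbdd. rewrite cintB; try sbdd.
by congr (cint P _); apply/funext => x; rewrite -Kp_id; [|apply: D|apply: D].
Qed.


Lemma amgm_bound (x E c : R) : 0 <= E ->
  (forall s, 0 < s -> x <= (E / s + s) / 2 + c) -> x <= Num.sqrt E + c.
Proof.
move=> E0 H; have [Ep|Ez] := ltP 0 E.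
  have sp : 0 < Num.sqrt E by rewrite sqrtr_gt0.
  apply: (le_trans (H _ sp)); rewrite lerD2r.
  have -> : E / Num.sqrt E = Num.sqrt E.
    by rewrite -{1}(sqr_sqrtr E0) expr2 -mulrA mulfV ?mulr1 // gt_eqF.
  by rewrite mulrDl -splitr.
have Ez0 : E = 0 by apply/le_anti; rewrite Ez E0.
rewrite Ez0 in H *; rewrite sqrtr0 add0r; apply/ler_addgt0Pr => e e0.
apply: (le_trans (H (2 * e) _)); first by rewrite mulr_gt0.
by rewrite mul0r add0r (mulrC 2 e) mulfK // addrC.
Qed.

Lemma pw (D r e ey s : R) : 0 <= e -> 0 <= ey -> 0 < s -> `|D| <= e + ey ->
  `|D * r| <= (2 * s)^-1 * e ^+ 2 + (s / 2 + ey / 2) * r ^+ 2 + ey / 2.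
Proof.
move=> e0 ey0 s0 hD; rewrite normrM.
have t0 := normr_ge0 r.
rewrite -(real_normK (num_real r)).
set t := `|r| in t0 *.
have h1 : `|D| * t <= (e + ey) * t by apply: ler_wpM2r.
have id : (2 * s)^-1 * e ^+ 2 + s / 2 * t ^+ 2 = (2 * s)^-1 * (e - s * t) ^+ 2 + e * t.
  by field; rewrite lt0r_neq0.
have h2 : e * t <= (2 * s)^-1 * e ^+ 2 + s / 2 * t ^+ 2.
  by rewrite id lerDr mulr_ge0 ?sqr_ge0 // invr_ge0 mulr_ge0 // ltW.
have h3 : ey * t <= ey / 2 * t ^+ 2 + ey / 2.
  have := mulr_ge0 ey0 (sqr_ge0 (t - 1)); nra.
nra.
Qed.

Lemma minbound (a b c w : R) : a <= c -> b <= w ->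
  `|Num.min a b - Num.min c w| <= (c - a) + (w - b).
Proof.
move=> ac bw; rewrite ler_norml; rewrite !minEle.
by case: ifP => h1; case: ifP => h2; move: h1 h2;
  rewrite ?(ltNge a b) ?(ltNge c w) => h1 h2;
  apply/andP; split; try lra; move/negbT: h1; move/negbT: h2;
  rewrite -?ltNge => h2 h1; lra.
Qed.


Lemma le_int_nm (f1 f2 : T -> \bar R) : (forall x, 0 <= f1 x)%E ->
  (forall x, f1 x <= f2 x)%E -> (\int[P]_x f1 x <= \int[P]_x f2 x)%E.
Proof.
move=> f10 f12; have f20 x : (0 <= f2 x)%E by apply: le_trans (f12 x).
rewrite !ge0_integralTE //; apply: ereal_sup_le => _ [h Hh <-].
by exists h => //= x; apply: le_trans (Hh x) (f12 x).
Qed.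

Lemma cnorm2_ge0 (z : R[i]) : 0 <= cnorm2 z.
Proof. by rewrite /cnorm2 addr_ge0 // sqr_ge0. Qed.

Lemma cabs2 (z : R[i]) : (`|(cabs z)%:E| `^ 2 = (cnorm2 z)%:E)%E.
Proof.
rewrite /= powR_mulrn ?normr_ge0 // ger0_norm ?sqrtr_ge0 //.
by rewrite sqr_sqrtr // cnorm2_ge0.
Qed.

Lemma l2sq (u : T -> R[i]) : (l2norm P u `^ 2 = \int[P]_x (cnorm2 (u x))%:E)%E.
Proof.
rewrite /l2norm poweR_Lnorm //; apply: eq_integral => x _; exact: cabs2.
Qed.

Lemma l2E (u : T -> R[i]) : l2norm P u = ((\int[P]_x (cnorm2 (u x))%:E) `^ (2^-1))%E.
Proof.
rewrite -l2sq -poweRrM mulfV // poweRe1 //; exact: Lnorm_ge0.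
Qed.


Lemma abs_fine (z : \bar R) : (`|fine z|%:E <= `|z|)%E.
Proof. by case: z => [r| |] //=; rewrite normr0 leey. Qed.

Ltac sside := first [by move=> x _; rewrite ?adde_ge0 ?mule_ge0 ?lee_fin ?sqr_ge0 ?mulr_ge0
  | by apply: emeasurable_funD; apply: emeasurable_funM
  | by apply: emeasurable_funM
  | by apply: emeasurable_funM => //; apply/measurable_EFinP; exact: measurable_funX
  | by apply/measurable_EFinP; exact: measurable_funX].

Lemma comp_bound (Dk phi e : T -> R) (ey E : R) :
  measurable_fun setT Dk -> measurable_fun setT phi -> measurable_fun setT e ->
  (forall x, 0 <= e x) -> 0 <= ey -> (forall x, `|Dk x| <= e x + ey) ->
  (\int[P]_x ((e x) ^+ 2)%:E = E%:E)%E -> (\int[P]_x ((phi x) ^+ 2)%:E <= 1)%E ->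
  `|\int[P]_x (Dk x * phi x)| <= Num.sqrt E + ey.
Proof.
move=> mD mphi me e0 ey0 hD hE hphi.
have E0 : 0 <= E.
  by rewrite -lee_fin -hE integral_ge0 // => x _; rewrite lee_fin sqr_ge0.
apply: amgm_bound => // s s0.
set a1 := (2 * s)^-1; set a2 := s / 2 + ey / 2; set a3 := ey / 2.
have a1p : 0 <= a1 by rewrite /a1 invr_ge0 mulr_ge0 // ltW.
have a2p : 0 <= a2 by rewrite /a2 addr_ge0 // divr_ge0 // ltW.
have a3p : 0 <= a3 by rewrite /a3 divr_ge0.
have mk : measurable_fun setT (fun x => Dk x * phi x) by exact: measurable_funM.
have me2 : measurable_fun setT (fun x => ((e x) ^+ 2)%:E).
  by apply/measurable_EFinP; exact: measurable_funX.
have mphi2 : measurable_fun setT (fun x => ((phi x) ^+ 2)%:E).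
  by apply/measurable_EFinP; exact: measurable_funX.
rewrite -lee_fin.
apply: (le_trans (_ : _ <= `|\int[P]_x (Dk x * phi x)%:E|)%E).
  by rewrite /Rintegral abs_fine.
apply: (le_trans (le_abse_integral _ measurableT _)); first exact/measurable_EFinP.
apply: (le_trans (_ : _ <= \int[P]_x ((a1 * e x ^+ 2 + a2 * phi x ^+ 2) + a3)%:E)%E).
  apply: ge0_le_integral => //.
  - by apply: measurableT_comp => //; apply/measurable_EFinP.
  - apply/measurable_EFinP; apply: measurable_funD => //.
    apply: measurable_funD; apply: measurable_funM => //; exact: measurable_funX.
  - by move=> x _; rewrite /= lee_fin; exact: pw.
have -> : (\int[P]_x ((a1 * e x ^+ 2 + a2 * phi x ^+ 2) + a3)%:E =
    a1%:E * E%:E + a2%:E * \int[P]_x (phi x ^+ 2)%:E + a3%:E)%E.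
  under eq_integral do rewrite !EFinD (EFinM a1) (EFinM a2).
  rewrite ge0_integralD //; try sside.
  rewrite ge0_integralD //; try sside.
  rewrite ge0_integralZl_EFin //; last by move=> x _; rewrite lee_fin sqr_ge0.
  rewrite ge0_integralZl_EFin //; last by move=> x _; rewrite lee_fin sqr_ge0.
  rewrite hE (_ : (fun x => a3%:E) = cst a3%:E)%E //.
  by rewrite integral_cst //= probability_setT mule1.
have J0 : (0 <= \int[P]_x (phi x ^+ 2)%:E)%E.
  by apply: integral_ge0 => x _; rewrite lee_fin sqr_ge0.
have Jfin : (\int[P]_x (phi x ^+ 2)%:E)%E \is a fin_num.
  by rewrite ge0_fin_numE // (le_lt_trans hphi) // ltry.
rewrite -(fineK Jfin) -!EFinM -!EFinD lee_fin.
move: J0 hphi; rewrite -(fineK Jfin) !lee_fin.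
set j := fine _ => j0 j1.
have id : a1 * E = (E / s) / 2 by rewrite /a1; field; rewrite lt0r_neq0.
rewrite id /a2 /a3; have := ler_wpM2l a2p j1; rewrite /a2; rewrite /=; lra.
Qed.


Lemma sq_le (a M : R) : `|a| <= M -> a ^+ 2 <= M ^+ 2.
Proof.
move=> h; rewrite -(real_normK (num_real a)); have := normr_ge0 a; nra.
Qed.

Lemma l2_le1 (g : T -> R[i]) : (l2norm P g <= 1)%E -> (\int[P]_x (cnorm2 (g x))%:E <= 1)%E.
Proof.
move=> h; rewrite -l2sq -(poweR1r 2).
apply: gt0_ler_poweR => //; rewrite in_itv /= ?leey ?andbT //; exact: Lnorm_ge0.
Qed.

Lemma key (Fi f : T -> R) (E : R) g :
  measurable_fun setT Fi -> measurable_fun setT f ->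
  (forall x, 0 <= Fi x) -> (forall x, Fi x <= f x) ->
  (\int[P]_x ((f x - Fi x) ^+ 2)%:E = E%:E)%E -> inL2 P g -> (l2norm P g <= 1)%E ->
  (l2norm P (op_sub (quant P Fi) (quant P f) g) <= (Num.sqrt (8 * E))%:E)%E.
Proof.
move=> mFi mf Fi0 Fif hE ig g1.
have ig' := ig; case: ig' => mre mim _.
have E0 : 0 <= E.
  by rewrite -lee_fin -hE integral_ge0 // => x _; rewrite lee_fin sqr_ge0.
have hg := l2_le1 _ g1.
have hre : (\int[P]_x ((complex.Re (g x)) ^+ 2)%:E <= 1)%E.
  apply: le_trans hg; apply: ge0_le_integral => //.
  - by move=> x _; rewrite lee_fin sqr_ge0.
  - by apply/measurable_EFinP; exact: measurable_funX.
  - apply/measurable_EFinP; apply: measurable_funD; exact: measurable_funX.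
  - by move=> x _; rewrite lee_fin /cnorm2 lerDl sqr_ge0.
have him : (\int[P]_x ((complex.Im (g x)) ^+ 2)%:E <= 1)%E.
  apply: le_trans hg; apply: ge0_le_integral => //.
  - by move=> x _; rewrite lee_fin sqr_ge0.
  - by apply/measurable_EFinP; exact: measurable_funX.
  - apply/measurable_EFinP; apply: measurable_funD; exact: measurable_funX.
  - by move=> x _; rewrite lee_fin /cnorm2 lerDr sqr_ge0.
have f0 x : 0 <= f x by apply: le_trans (Fif x).
have e0 x : 0 <= f x - Fi x by rewrite subr_ge0.
have me : measurable_fun setT (fun x => f x - Fi x) by exact: measurable_funB.
have pt y : cnorm2 (op_sub (quant P Fi) (quant P f) g y) <=
    4 * E + 4 * (f y - Fi y) ^+ 2.
  rewrite /op_sub !quantE // cintB //; try exact: bdd_Kp.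
  have mD : measurable_fun setT (fun x => Kp (Fi x) (Fi y) - Kp (f x) (f y)).
    exact: (proj1 (bddB _ _ (bdd_Kp Fi (Fi y) mFi) (bdd_Kp f (f y) mf))).
  have hD x : `|Kp (Fi x) (Fi y) - Kp (f x) (f y)| <= (f x - Fi x) + (f y - Fi y).
    by rewrite !KpE1 //; exact: minbound.
  have r1 := comp_bound _ _ _ _ _ mD mre me e0 (e0 y) hD hE hre.
  have r2 := comp_bound _ _ _ _ _ mD mim me e0 (e0 y) hD hE him.
  rewrite /cnorm2 Re_cintk Im_cintk.
  have := sq_le _ _ r1; have := sq_le _ _ r2.
  have := sqr_sqrtr E0; have := sqrtr_ge0 E.
  set c := Num.sqrt E; set a := \int[P]_x _; set b := \int[P]_x _.
  have := sqr_ge0 (c - (f y - Fi y)); nra.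
have hint : (\int[P]_x (cnorm2 (op_sub (quant P Fi) (quant P f) g x))%:E <= (8 * E)%:E)%E.
  apply: (le_trans (le_int_nm _ (fun y => (4 * E + 4 * (f y - Fi y) ^+ 2)%:E) _ _)).
  - by move=> x; rewrite lee_fin cnorm2_ge0.
  - by move=> x; rewrite lee_fin.
  under eq_integral do rewrite EFinD (EFinM 4 (_ ^+ 2)).
  rewrite ge0_integralD //; try sside.
  rewrite ge0_integralZl_EFin //; try sside.
  rewrite hE (_ : (fun x => (4 * E)%:E) = cst (4 * E)%:E)%E //.
  rewrite integral_cst //= probability_setT mule1 -EFinM -EFinD lee_fin; lra.
rewrite l2E (_ : (Num.sqrt (8 * E))%:E = ((8 * E)%:E `^ (2^-1))%E); last first.
  by rewrite poweR_EFin powR12_sqrt // mulr_ge0.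
apply: gt0_ler_poweR => //; rewrite in_itv /= ?leey ?andbT // ?lee_fin ?mulr_ge0 //.
by apply: integral_ge0 => x _; rewrite lee_fin cnorm2_ge0.
Qed.

Lemma inL2_0 : inL2 P (fun _ => (0 : R[i])).
Proof.
split; try exact: measurable_cst.
have -> : (fun x : T => (cnorm2 (0 : R[i]))%:E) = cst 0%E.
  by apply/funext => x; rewrite /cnorm2 /= expr0n /= addr0.
by rewrite integral0 ltry.
Qed.

Lemma l2_0 : (l2norm P (fun _ => (0%R : R[i])) <= 1)%E.
Proof.
rewrite l2E (_ : (fun x : T => (cnorm2 (0 : R[i]))%:E) = cst 0%E).
  by rewrite integral0 poweR0r ?lee01 // invr_neq0.
by apply/funext => x; rewrite /cnorm2 /= expr0n /= addr0.
Qed.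

Lemma part_c (F : nat -> T -> R) (f : T -> R) :
     (forall i, rv P (F i)) -> rv P f ->
     (forall x, 0 <= F 0%N x) ->
     (forall i x, F i x <= F i.+1 x) ->
     (forall x, (fun i => F i x) @ \oo --> f x) ->
     (fun i => opnorm P (op_sub (quant P (F i)) (quant P f))) @ \oo --> 0%E.
Proof.
move=> rvF [mf f2] F00 Finc Fcvg.
have mF i : measurable_fun setT (F i) by case: (rvF i).
have F0 i x : 0 <= F i x.
  by elim: i => [|i IH]; [exact: F00 | exact: le_trans IH (Finc i x)].
have Ff i x : F i x <= f x.
  have nd : {homo (fun i => F i x) : n m / (n <= m)%N >-> n <= m}.
    by apply/nondecreasing_seqP => n; exact: Finc.
  have := nondecreasing_cvgn_le nd (cvgP _ (Fcvg x)) i.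
  by rewrite (cvg_lim _ (Fcvg x)).
have f0 x : 0 <= f x by apply: le_trans (Ff 0%N x).
have mfi : measurable_fun setT (fun x => ((f x) ^+ 2)%:E).
  by apply/measurable_EFinP; exact: measurable_funX.
have mfn n : measurable_fun setT (fun x => ((f x - F n x) ^+ 2)%:E).
  by apply/measurable_EFinP; apply: measurable_funX; exact: measurable_funB.
have le_e n x : (f x - F n x) ^+ 2 <= f x ^+ 2.
  by have := F0 n x; have := Ff n x; nra.
have fin n : (\int[P]_x ((f x - F n x) ^+ 2)%:E)%E \is a fin_num.
  rewrite ge0_fin_numE; last by apply: integral_ge0 => x _; rewrite lee_fin sqr_ge0.
  apply: le_lt_trans f2; apply: ge0_le_integral => //.
  - by move=> x _; rewrite lee_fin sqr_ge0.
  - by move=> x _; rewrite lee_fin.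
pose E n := fine (\int[P]_x ((f x - F n x) ^+ 2)%:E)%E.
have hE n : (\int[P]_x ((f x - F n x) ^+ 2)%:E = (E n)%:E)%E by rewrite fineK.
have E0 n : 0 <= E n by rewrite /E fine_ge0 // integral_ge0 // => x _; rewrite lee_fin sqr_ge0.
have bnd n : (0 <= opnorm P (op_sub (quant P (F n)) (quant P f)) <=
    (Num.sqrt (8 * E n))%:E)%E.
  apply/andP; split.
    have H0 : (0 <= l2norm P (op_sub (quant P (F n)) (quant P f) (fun _ => 0%R)))%E.
      exact: Lnorm_ge0.
    apply: le_trans H0 _; apply: ereal_sup_ubound.
    by exists (fun _ => 0%R) => //; split; [exact: inL2_0 | exact: l2_0].
  apply: ge_ereal_sup => _ [g [ig g1] <-].
  by apply: key => //; exact: hE.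
have Ecvg : E @ \oo --> 0.
  have ig : P.-integrable setT (fun x => ((f x) ^+ 2)%:E).
    apply/integrableP; split => //.
    by under eq_integral do rewrite /= ger0_norm ?sqr_ge0 //.
  have fcv : {ae P, forall x, setT x ->
      (fun n => ((f x - F n x) ^+ 2)%:E) @ \oo --> (cst 0%E) x}.
    apply: aeW => x _; apply: cvg_EFin; first by near=> n.
    have h1 : (fun n => f x - F n x) @ \oo --> 0.
      by rewrite -(subrr (f x)); apply: cvgB; [exact: cvg_cst | exact: Fcvg].
    have := cvgM h1 h1; rewrite mul0r.
    have -> : fine \o (fun n => ((f x - F n x) ^+ 2)%:E) =
      (fun n => (f x - F n x) * (f x - F n x)) by apply/funext => n; rewrite /= expr2.
    move=> H; exact: H.
  have dom : {ae P, forall x n, setT x ->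
      (`|((f x - F n x) ^+ 2)%:E| <= (fun x => ((f x) ^+ 2)%:E) x)%E}.
    by apply: aeW => x n _; rewrite /= lee_fin ger0_norm ?sqr_ge0.
  have [_ _] := dominated_convergence measurableT mfn (measurable_cst _) fcv ig dom.
  rewrite integral0 => /fine_cvg H; exact: H.
apply: (squeeze_cvge (f := cst 0%E) (h := fun n => (Num.sqrt (8 * E n))%:E)).
- by near=> n; exact: bnd.
- exact: cvg_cst.
apply: cvg_EFin; first by near=> n.
have -> : fine \o (fun n => (Num.sqrt (8 * E n))%:E) = (fun n => Num.sqrt (8 * E n)).
  by apply/funext.
have h8 : (fun n => 8 * E n) @ \oo --> (8 * 0 : R) by apply: cvgMr.
rewrite mulr0 in h8; rewrite -sqrtr0.
apply: (cvg_comp _ _ h8); exact: sqrt_continuous.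
Unshelve. all: by end_near.
Qed.

End S.

Theorem theorem3p1 (R : realType) (d : measure_display) (T : measurableType d)
    (P : probability T R) :
  (* (a) *)
  (forall A : set T, measurable A ->
     op_eq P (quant P (\1_A : T -> R)) (muop P A)) /\
  (* (b) *)
  (forall (f : T -> R) (a : R), rv P f ->
     op_eq P (quant P (fun x => a * f x)) (op_scale a (quant P f))) /\
  (* (c) *)
  (forall (F : nat -> T -> R) (f : T -> R),
     (forall i, rv P (F i)) -> rv P f ->
     (forall x, 0 <= F 0%N x) ->
     (forall i x, F i x <= F i.+1 x) ->
     (forall x, (fun i => F i x) @ \oo --> f x) ->
     (fun i => opnorm P (op_sub (quant P (F i)) (quant P f))) @ \oo --> 0%E) /\
  (* (d) *)
  (forall f g h : T -> R, rv P f -> rv P g -> rv P h ->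
     [set x | f x != 0] `&` [set x | g x != 0] = set0 ->
     [set x | f x != 0] `&` [set x | h x != 0] = set0 ->
     [set x | g x != 0] `&` [set x | h x != 0] = set0 ->
     op_eq P (quant P (fun x => f x + g x + h x))
       (op_sub (op_sub (op_sub
          (op_add (op_add (quant P (fun x => f x + g x))
                          (quant P (fun x => f x + h x)))
                  (quant P (fun x => g x + h x)))
          (quant P f)) (quant P g)) (quant P h))).
Proof.
Proof.
split; first by move=> A mA; exact: part_a.
split; first by move=> f a rf; exact: part_b.
split; first by move=> F f rF rf F0 Fi Fc; exact: part_c.
by move=> f g h rf rg rh H1 H2 H3; exact: part_d.
Qed.
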